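(* (A weighted, repeated argument, double, less-than sum simplification.) For complex variables $x_0,\dots,x_q$, $q\ge0$, and $\tau\in\mathbb{R}$, $$\sum_{\substack{i,j=0\\ i\le j}}^{q}x_i\,e^{-\tau[x_0,\ldots,x_q,x_i,x_j]}=\Big(-\frac{\tau^2}{2}\frac{\partial}{\partial\tau}-\sum_{i=0}^{q}i\,\frac{\partial}{\partial x_i}\Big)e^{-\tau[x_0,\ldots,x_q]}.$$
   Context: For $t\in\mathbb{R}$ and numbers $y_0,\dots,y_p$ (repetitions allowed), $e^{t[y_0,\ldots,y_p]}$ denotes the divided difference of $f(x)=e^{tx}$, $f[y_0,\ldots,y_p]=\frac{1}{2\pi i}\oint_\Gamma\frac{f(x)}{\prod_{i=0}^p(x-y_i)}\,\mathrm{d}x$, $\Gamma$ a positively oriented contour enclosing all $y_i$; it is a smooth (indeed analytic) function of $t$ and of the $y_i$. The multiset $[x_0,\ldots,x_q,x_i,x_j]$ consists of $x_0,\ldots,x_q$ plus extra copies of $x_i$ and $x_j$. *)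

(* Defs.v *)
From Stdlib Require Import Reals List.
From Coquelicot Require Import Coquelicot.
Open Scope R_scope.

Definition Cexp (z : C) : C := (exp (Re z) * cos (Im z), exp (Re z) * sin (Im z))%R.

Definition node_prod (ys : list C) (z : C) : C :=
  fold_right (fun y acc => Cmult (Cminus z y) acc) (RtoC 1) ys.

(* sum of moduli of the nodes, used to choose a circle enclosing all of them *)
Definition node_radius (ys : list C) : R :=
  1 + fold_right (fun y acc => Cmod y + acc) 0 ys.

(* Divided difference f[y_0,...,y_p] = (1/2 pi i) \oint_Gamma f(x)/prod(x - y_i) dx,
   with Gamma the positively oriented circle |x| = node_radius ys (which encloses
   every node), parametrised by x = r e^{i theta}, dx = i r e^{i theta} d theta. *)
Definition divdiff (f : C -> C) (ys : list C) : C :=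
  let r := node_radius ys in
  let gam := fun th : R => (r * cos th, r * sin th)%R : C in
  Cmult (Cinv (Cmult (RtoC (2 * PI)) Ci))
    (@RInt C_R_CompleteNormedModule
       (fun th : R => Cmult (Cdiv (f (gam th)) (node_prod ys (gam th)))
                             (Cmult Ci (gam th)))
       0 (2 * PI)).

Definition exp_dd (t : R) (ys : list C) : C := divdiff (fun x => Cexp (Cmult (RtoC t) x)) ys.

Definition nodes (x : nat -> C) (q : nat) : list C := map x (seq 0 (S q)).

Definition upd (x : nat -> C) (i : nat) (z : C) : nat -> C :=
  fun k => if Nat.eqb k i then z else x k.

Definition Csum (f : nat -> C) (n : nat) : C :=
  fold_right Cplus (RtoC 0) (map f (seq 0 (S n))).

(* Main.v *)
Require Import Defs.
From Stdlib Require Import Reals List Lra Lia.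
From Coquelicot Require Import Coquelicot.
Open Scope R_scope.
Open Scope R_scope.

Lemma normCR (z : C) : @norm R_AbsRing C_R_NormedModule z = Cmod z.
Proof. destruct z as [a b]. unfold Cmod. simpl fst; simpl snd.
change (@norm _ C_R_NormedModule (a,b)) with (sqrt (Rabs a ^2 + Rabs b ^2)).
rewrite !pow2_abs. reflexivity. Qed.

Lemma normR (r : R) : @norm R_AbsRing R_NormedModule r = Rabs r.
Proof. reflexivity. Qed.

Definition CD (f : R -> C) (x : R) (l : C) := @is_derive R_AbsRing C_R_NormedModule f x l.

Lemma C_decomp (z : C) : z = @plus C_R_NormedModule (@scal R_AbsRing C_R_NormedModule (fst z) (1,0)) (@scal R_AbsRing C_R_NormedModule (snd z) (0,1)).
Proof.
  destruct z as [a b]. simpl. unfold plus, scal; simpl.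
  unfold prod_plus, prod_scal; simpl. unfold plus, scal; simpl.
  unfold mult; simpl. f_equal; ring.
Qed.

Lemma CD_pair (f : R -> C) x l :
  is_derive (fun u => fst (f u)) x (fst l) -> is_derive (fun u => snd (f u)) x (snd l) -> CD f x l.
Proof.
  intros H1 H2. unfold CD.
  rewrite (C_decomp l).
  apply is_derive_ext with (f := fun u => @plus C_R_NormedModule (@scal R_AbsRing C_R_NormedModule (fst (f u)) (1,0)) (@scal R_AbsRing C_R_NormedModule (snd (f u)) (0,1))).
  { intros t. now rewrite <- C_decomp. }
  apply is_derive_plus; apply is_derive_scal_l; assumption.
Qed.

Lemma lin_fst : @is_linear R_AbsRing C_R_NormedModule R_NormedModule (fun z : C => fst z).
Proof.
  split.
  - intros; reflexivity.
  - intros; reflexivity.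
  - exists 1. split; [lra|]. intros z. rewrite Rmult_1_l.
    rewrite normR, normCR.
    pose proof (Rmax_Cmod z). pose proof (Rmax_l (Rabs (fst z)) (Rabs (snd z))). lra.
Qed.

Lemma lin_snd : @is_linear R_AbsRing C_R_NormedModule R_NormedModule (fun z : C => snd z).
Proof.
  split.
  - intros; reflexivity.
  - intros; reflexivity.
  - exists 1. split; [lra|]. intros z. rewrite Rmult_1_l.
    rewrite normR, normCR.
    pose proof (Rmax_Cmod z). pose proof (Rmax_r (Rabs (fst z)) (Rabs (snd z))). lra.
Qed.

Lemma CD_fst (f : R -> C) x l : CD f x l -> is_derive (fun u => fst (f u)) x (fst l).
Proof.
  intros H. unfold is_derive.
  pose proof (filterdiff_comp f (fun z : C => fst z) _ (fun z : C => fst z) H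
     (filterdiff_linear _ lin_fst)) as H'.
  eapply filterdiff_ext_lin. exact H'.
  intros y. reflexivity.
Qed.

Lemma CD_snd (f : R -> C) x l : CD f x l -> is_derive (fun u => snd (f u)) x (snd l).
Proof.
  intros H. unfold is_derive.
  pose proof (filterdiff_comp f (fun z : C => snd z) _ (fun z : C => snd z) H
     (filterdiff_linear _ lin_snd)) as H'.
  eapply filterdiff_ext_lin. exact H'.
  intros y. reflexivity.
Qed.
Open Scope R_scope.

Lemma Rd_eq (f : R -> R) x (l lp : R) : is_derive f x l -> (l = lp :> R) -> is_derive f x lp.
Proof. intros H ->; exact H. Qed.

Lemma Rd_ext (f g : R -> R) x l : (forall t, f t = g t) -> is_derive f x l -> is_derive g x l.
Proof. intros; eapply is_derive_ext; eauto. Qed.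

Lemma CD_eq f x (l lp : C) : CD f x l -> (l = lp :> C) -> CD f x lp.
Proof. intros H ->; exact H. Qed.

Lemma CD_ext f g x l : (forall t, f t = g t) -> CD f x l -> CD g x l.
Proof. intros; eapply is_derive_ext; eauto. Qed.

Lemma Rmult_d (f g : R -> R) x a b : is_derive f x a -> is_derive g x b ->
  is_derive (fun t => f t * g t) x (a * g x + f x * b).
Proof. intros. apply (is_derive_mult f g x a b); auto. intros; apply Rmult_comm. Qed.

Lemma Rplus_d (f g : R -> R) x a b : is_derive f x a -> is_derive g x b ->
  is_derive (fun t => f t + g t) x (a + b).
Proof. intros. apply (is_derive_plus f g x a b); auto. Qed.

Lemma Rminus_d (f g : R -> R) x a b : is_derive f x a -> is_derive g x b ->
  is_derive (fun t => f t - g t) x (a - b).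
Proof. intros. apply (is_derive_minus f g x a b); auto. Qed.

Lemma Ropp_d (f : R -> R) x a : is_derive f x a ->
  is_derive (fun t => - f t) x (- a).
Proof. intros. apply (is_derive_opp f x a); auto. Qed.

Lemma Rconst_d (c : R) x : is_derive (fun _ => c) x 0.
Proof. apply (is_derive_const c x). Qed.

Lemma Rexp_d (f : R -> R) x a : is_derive f x a -> is_derive (fun t => exp (f t)) x (exp (f x) * a).
Proof. intros H. eapply Rd_eq. apply (is_derive_comp exp f x). apply is_derive_exp. exact H.
  simpl. unfold scal; simpl; unfold mult; simpl. ring. Qed.

Lemma Rcos_d (f : R -> R) x a : is_derive f x a -> is_derive (fun t => cos (f t)) x (- sin (f x) * a).
Proof. intros H. eapply Rd_eq. apply (is_derive_comp cos f x). apply is_derive_cos. exact H.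
  simpl. unfold scal; simpl; unfold mult; simpl. ring. Qed.

Lemma Rsin_d (f : R -> R) x a : is_derive f x a -> is_derive (fun t => sin (f t)) x (cos (f x) * a).
Proof. intros H. eapply Rd_eq. apply (is_derive_comp sin f x). apply is_derive_sin. exact H.
  simpl. unfold scal; simpl; unfold mult; simpl. ring. Qed.

Lemma Rdiv_d (f g : R -> R) x a b : is_derive f x a -> is_derive g x b -> g x <> 0 ->
  is_derive (fun t => f t / g t) x ((a * g x - f x * b) / g x ^ 2).
Proof. intros. apply is_derive_div; auto. Qed.

Lemma CD_const (c : C) x : CD (fun _ => c) x (RtoC 0).
Proof. apply CD_pair; simpl; apply Rconst_d. Qed.

Lemma CD_RtoC (f : R -> R) x a : is_derive f x a -> CD (fun t => RtoC (f t)) x (RtoC a).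
Proof. intros H. apply CD_pair; simpl. exact H. apply Rconst_d. Qed.

Lemma CD_plus f g x a b : CD f x a -> CD g x b -> CD (fun t => Cplus (f t) (g t)) x (Cplus a b).
Proof.
  intros Hf Hg. apply CD_fst in Hf as Hf1. apply CD_snd in Hf as Hf2.
  apply CD_fst in Hg as Hg1. apply CD_snd in Hg as Hg2.
  apply CD_pair; simpl; apply Rplus_d; auto.
Qed.

Lemma CD_opp f x a : CD f x a -> CD (fun t => Copp (f t)) x (Copp a).
Proof.
  intros Hf. apply CD_fst in Hf as Hf1. apply CD_snd in Hf as Hf2.
  apply CD_pair; simpl; apply Ropp_d; auto.
Qed.

Lemma CD_minus f g x a b : CD f x a -> CD g x b -> CD (fun t => Cminus (f t) (g t)) x (Cminus a b).
Proof.
  intros Hf Hg. unfold Cminus. apply CD_plus; auto. apply CD_opp; auto.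
Qed.

Lemma CD_mult f g x a b : CD f x a -> CD g x b ->
  CD (fun t => Cmult (f t) (g t)) x (Cplus (Cmult a (g x)) (Cmult (f x) b)).
Proof.
  intros Hf Hg. apply CD_fst in Hf as Hf1. apply CD_snd in Hf as Hf2.
  apply CD_fst in Hg as Hg1. apply CD_snd in Hg as Hg2.
  apply CD_pair; simpl.
  - eapply Rd_eq. apply Rminus_d; apply Rmult_d; eauto. cbv beta; ring.
  - eapply Rd_eq. apply Rplus_d; apply Rmult_d; eauto. cbv beta; ring.
Qed.

Lemma CD_exp f x a : CD f x a -> CD (fun t => Cexp (f t)) x (Cmult (Cexp (f x)) a).
Proof.
  intros Hf. apply CD_fst in Hf as Hf1. apply CD_snd in Hf as Hf2.
  apply CD_pair; unfold Cexp; simpl.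
  - eapply Rd_eq. apply Rmult_d. apply Rexp_d; eauto. apply Rcos_d; eauto. cbv beta; ring.
  - eapply Rd_eq. apply Rmult_d. apply Rexp_d; eauto. apply Rsin_d; eauto. cbv beta; ring.
Qed.

Lemma sq_nz u v : u * (u * 1) + v * (v * 1) <> 0 ->
  (u * u - v * v) * (u * u - v * v) + (u * v + v * u) * (u * v + v * u) <> 0 /\
  u * u + v * v <> 0.
Proof.
  intros HN. split.
  - intros Hc. assert (E : (u*u+v*v)*(u*u+v*v) = 0) by (rewrite <- Hc; ring).
    apply Rmult_integral in E. apply HN. destruct E; lra.
  - lra.
Qed.

Lemma CD_inv f x a : CD f x a -> f x <> RtoC 0 ->
  CD (fun t => Cinv (f t)) x (Copp (Cmult a (Cinv (Cmult (f x) (f x))))).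
Proof.
  intros Hf Hnz. apply CD_fst in Hf as Hf1. apply CD_snd in Hf as Hf2.
  assert (HN : fst (f x) ^ 2 + snd (f x) ^ 2 <> 0).
  { intros HN. apply Hnz. destruct (f x) as [u v]; simpl in HN.
    assert (u = 0) by nra. assert (v = 0) by nra. subst. reflexivity. }
  assert (HdN : is_derive (fun t => fst (f t) ^ 2 + snd (f t) ^ 2) x
     (2 * fst (f x) * fst a + 2 * snd (f x) * snd a)).
  { eapply Rd_eq. apply Rplus_d; apply is_derive_pow; eassumption. simpl. ring. }
  apply CD_pair; unfold Cinv; simpl.
  - eapply Rd_eq. apply Rdiv_d. exact Hf1. exact HdN. exact HN.
    cbv beta. destruct (f x) as [u v]. destruct a as [p q]. simpl in *. field. exact (sq_nz u v HN).
  - eapply Rd_eq. apply Rdiv_d. apply Ropp_d. exact Hf2. exact HdN. exact HN.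
    cbv beta. destruct (f x) as [u v]. destruct a as [p q]. simpl in *. field. exact (sq_nz u v HN).
Qed.
Open Scope R_scope.

Section Cont.
Context {U : UniformSpace}.

Lemma Rc_exp (y : R) : continuous exp y.
Proof. apply (continuous_exp_comp (fun t => t)). apply continuous_id. Qed.
Lemma Rc_cos (y : R) : continuous cos y.
Proof. apply (continuous_cos_comp (fun t => t)). apply continuous_id. Qed.
Lemma Rc_sin (y : R) : continuous sin y.
Proof. apply (continuous_sin_comp (fun t => t)). apply continuous_id. Qed.
Lemma Rc_inv (y : R) : y <> 0 -> continuous Rinv y.
Proof. intros. apply (continuous_Rinv_comp (fun t => t)). apply continuous_id. auto. Qed.

Lemma Rc_plus (f g : U -> R) x : continuous f x -> continuous g x -> continuous (fun y => f y + g y) x.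
Proof. intros. apply (@continuous_plus U R_AbsRing R_NormedModule f g); auto. Qed.
Lemma Rc_mult (f g : U -> R) x : continuous f x -> continuous g x -> continuous (fun y => f y * g y) x.
Proof. intros. apply (@continuous_mult U R_AbsRing f g); auto. Qed.
Lemma Rc_opp (f : U -> R) x : continuous f x -> continuous (fun y => - f y) x.
Proof. intros. apply (@continuous_opp U R_AbsRing R_NormedModule f); auto. Qed.
Lemma Rc_minus (f g : U -> R) x : continuous f x -> continuous g x -> continuous (fun y => f y - g y) x.
Proof. intros. apply Rc_plus; auto. apply Rc_opp; auto. Qed.
Lemma Rc_const (c : R) x : continuous (fun _ : U => c) x.
Proof. apply continuous_const. Qed.
Lemma Rc_comp (f : U -> R) (g : R -> R) x : continuous f x -> continuous g (f x) -> continuous (fun y => g (f y)) x.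
Proof. intros. apply (continuous_comp f g); auto. Qed.
Lemma Rc_div (f g : U -> R) x : continuous f x -> continuous g x -> g x <> 0 -> continuous (fun y => f y / g y) x.
Proof. intros. apply Rc_mult; auto. apply (Rc_comp g Rinv); auto. apply Rc_inv; auto. Qed.

Lemma Cc_fst (f : U -> C) x : continuous f x -> continuous (fun y => fst (f y)) x.
Proof.
  intros H. apply (continuous_comp f (fun z : C => fst z)); auto.
  destruct (f x) as [a b]. apply (@continuous_fst R_UniformSpace R_UniformSpace).
Qed.
Lemma Cc_snd (f : U -> C) x : continuous f x -> continuous (fun y => snd (f y)) x.
Proof.
  intros H. apply (continuous_comp f (fun z : C => snd z)); auto.
  destruct (f x) as [a b]. apply (@continuous_snd R_UniformSpace R_UniformSpace).
Qed.

Lemma Cc_pair (f : U -> C) x : continuous (fun y => fst (f y)) x -> continuous (fun y => snd (f y)) x -> continuous f x.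
Proof.
  intros H1 H2.
  assert (H : continuous (fun y => (fst (f y), snd (f y)) : C) x).
  { apply (continuous_comp_2 (fun y => fst (f y)) (fun y => snd (f y)) (fun a b => (a, b) : C)); auto.
    intros P HP. simpl in HP. unfold filtermap. revert HP. apply filter_imp. intros [u v]; auto. }
  assert (Eg : forall y, ((fst (f y), snd (f y)) : C) = f y) by (intros; destruct (f y); reflexivity).
  unfold continuous in *. simpl in H. rewrite Eg in H.
  eapply filterlim_ext; [exact Eg | exact H].
Qed.

Lemma Cc_const (c : C) x : continuous (fun _ : U => c) x.
Proof. apply continuous_const. Qed.

Lemma Cc_RtoC (f : U -> R) x : continuous f x -> continuous (fun y => RtoC (f y)) x.
Proof. intros H. apply Cc_pair; simpl; auto. apply Rc_const. Qed.

Lemma Cc_plus (f g : U -> C) x : continuous f x -> continuous g x -> continuous (fun y => Cplus (f y) (g y)) x.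
Proof.
  intros Hf Hg. apply Cc_pair; simpl; apply Rc_plus;
  first [apply Cc_fst | apply Cc_snd]; auto.
Qed.

Lemma Cc_opp (f : U -> C) x : continuous f x -> continuous (fun y => Copp (f y)) x.
Proof.
  intros Hf. apply Cc_pair; simpl; apply Rc_opp;
  first [apply Cc_fst | apply Cc_snd]; auto.
Qed.

Lemma Cc_minus (f g : U -> C) x : continuous f x -> continuous g x -> continuous (fun y => Cminus (f y) (g y)) x.
Proof. intros. unfold Cminus. apply Cc_plus; auto. apply Cc_opp; auto. Qed.

Lemma Cc_mult (f g : U -> C) x : continuous f x -> continuous g x -> continuous (fun y => Cmult (f y) (g y)) x.
Proof.
  intros Hf Hg. apply Cc_fst in Hf as Hf1. apply Cc_snd in Hf as Hf2.
  apply Cc_fst in Hg as Hg1. apply Cc_snd in Hg as Hg2.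
  apply Cc_pair; simpl.
  - apply Rc_minus; apply Rc_mult; auto.
  - apply Rc_plus; apply Rc_mult; auto.
Qed.

Lemma Cc_exp (f : U -> C) x : continuous f x -> continuous (fun y => Cexp (f y)) x.
Proof.
  intros Hf. apply Cc_fst in Hf as Hf1. apply Cc_snd in Hf as Hf2.
  apply Cc_pair; unfold Cexp; simpl; apply Rc_mult.
  - apply (Rc_comp _ exp); auto. apply Rc_exp.
  - apply (Rc_comp _ cos); auto. apply Rc_cos.
  - apply (Rc_comp _ exp); auto. apply Rc_exp.
  - apply (Rc_comp _ sin); auto. apply Rc_sin.
Qed.

Lemma Cc_inv (f : U -> C) x : continuous f x -> f x <> RtoC 0 -> continuous (fun y => Cinv (f y)) x.
Proof.
  intros Hf Hnz. apply Cc_fst in Hf as Hf1. apply Cc_snd in Hf as Hf2.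
  assert (HN : fst (f x) ^ 2 + snd (f x) ^ 2 <> 0).
  { intros HN. apply Hnz. destruct (f x) as [u v]; simpl in HN.
    assert (u = 0) by nra. assert (v = 0) by nra. subst. reflexivity. }
  assert (HcN : continuous (fun y => fst (f y) ^ 2 + snd (f y) ^ 2) x).
  { apply Rc_plus; simpl; apply Rc_mult; auto; apply Rc_mult; auto; apply Rc_const. }
  apply Cc_pair; unfold Cinv; simpl; apply Rc_div; auto. apply Rc_opp; auto.
Qed.

Lemma Cc_comp (f : U -> C) (g : C -> C) x : continuous f x -> continuous g (f x) -> continuous (fun y => g (f y)) x.
Proof. intros. apply (continuous_comp f g); auto. Qed.
End Cont.
Open Scope R_scope.

Lemma RInt_C_comp (f : R -> C) a b : ex_RInt (V:=C_R_CompleteNormedModule) f a b ->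
  @RInt C_R_CompleteNormedModule f a b = (RInt (fun t => fst (f t)) a b, RInt (fun t => snd (f t)) a b).
Proof.
  intros H. symmetry.
  apply (RInt_fct_extend_pair (U:=R_NormedModule) (V:=R_NormedModule) (@RInt R_CompleteNormedModule) (@RInt R_CompleteNormedModule)).
  - intros. apply is_RInt_unique; auto.
  - intros. apply is_RInt_unique; auto.
  - apply (RInt_correct (V:=C_R_CompleteNormedModule)). exact H.
Qed.

Lemma ex_RInt_C_fst (f : R -> C) a b : ex_RInt (V:=C_R_CompleteNormedModule) f a b -> ex_RInt (fun t => fst (f t)) a b.
Proof. intros H. apply (ex_RInt_fct_extend_fst (U:=R_NormedModule) (V:=R_NormedModule)). exact H. Qed.

Lemma ex_RInt_C_snd (f : R -> C) a b : ex_RInt (V:=C_R_CompleteNormedModule) f a b -> ex_RInt (fun t => snd (f t)) a b.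
Proof. intros H. apply (ex_RInt_fct_extend_snd (U:=R_NormedModule) (V:=R_NormedModule)). exact H. Qed.

Lemma ex_RInt_Ccont (f : R -> C) a b : (forall t, Rmin a b <= t <= Rmax a b -> continuous f t) ->
  ex_RInt (V:=C_R_CompleteNormedModule) f a b.
Proof. intros H. apply (ex_RInt_continuous (V:=C_R_CompleteNormedModule)). exact H. Qed.

Lemma locally_fst_lift (Q : R -> Prop) x t : locally x Q -> locally (x, t) (fun z : R * R => Q (fst z)).
Proof.
  intros H. apply (@continuous_fst R_UniformSpace R_UniformSpace x t). exact H.
Qed.

Lemma cont_slice (D : R -> R -> C) x t : continuous (fun p : R * R => D (fst p) (snd p)) (x, t) ->
  continuous (D x) t.
Proof.
  intros H.
  apply (continuous_comp (fun s : R => (x, s)) (fun p : R * R => D (fst p) (snd p)) t); [|exact H].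
  apply (continuous_comp_2 (fun _ : R => x) (fun s : R => s) (fun a b => (a, b))).
  apply continuous_const. apply continuous_id.
  intros P HP. unfold filtermap. simpl in HP. revert HP. apply filter_imp. intros [u v]; auto.
Qed.

Lemma comp_deriv_RInt (G E : R -> R -> R) (a b x : R) : a <= b ->
  locally x (fun u => forall t, is_derive (fun u => G u t) u (E u t)) ->
  (forall t, a <= t <= b -> continuous (fun p : R * R => E (fst p) (snd p)) (x, t)) ->
  locally x (fun u => ex_RInt (G u) a b) ->
  is_derive (fun u => RInt (G u) a b) x (RInt (E x) a b).
Proof.
  intros Hab Hd Hc Hi.
  assert (HR := is_derive_RInt_param G a b x).
  rewrite Rmin_left, Rmax_right in HR by lra.
  assert (HE : RInt (fun t => Derive (fun u => G u t) x) a b = RInt (E x) a b).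
  { apply RInt_ext. intros t _. apply is_derive_unique. apply locally_singleton in Hd. apply Hd. }
  rewrite <- HE. apply HR.
  - revert Hd. apply filter_imp. intros u Hu t _. eexists. apply Hu.
  - intros t Ht. apply continuity_2d_pt_ext_loc with (f := fun u v => E u v).
    + apply locally_2d_locally. pose proof (locally_fst_lift _ x t Hd) as H2.
      revert H2. apply filter_imp. intros z Hz. symmetry. apply is_derive_unique. apply Hz.
    + apply continuity_2d_pt_filterlim. apply (Hc t Ht).
  - exact Hi.
Qed.

Lemma CD_RInt (F D : R -> R -> C) (a b x : R) : a <= b ->
  locally x (fun u => forall t, CD (fun u => F u t) u (D u t)) ->
  (forall t, a <= t <= b -> continuous (fun p : R * R => D (fst p) (snd p)) (x, t)) ->
  locally x (fun u => forall t, a <= t <= b -> continuous (F u) t) ->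
  CD (fun u => @RInt C_R_CompleteNormedModule (F u) a b) x (@RInt C_R_CompleteNormedModule (D x) a b).
Proof.
  intros Hab Hd Hc Hi.
  assert (Hex : locally x (fun u => ex_RInt (V:=C_R_CompleteNormedModule) (F u) a b)).
  { revert Hi. apply filter_imp. intros u Hu. apply ex_RInt_Ccont.
    rewrite Rmin_left, Rmax_right by lra. exact Hu. }
  rewrite (RInt_C_comp (D x)).
  2:{ apply ex_RInt_Ccont. rewrite Rmin_left, Rmax_right by lra. intros t Ht. apply cont_slice. auto. }
  unfold CD. apply (is_derive_ext_loc (fun u => (RInt (fun t => fst (F u t)) a b, RInt (fun t => snd (F u t)) a b) : C)).
  { revert Hex. apply filter_imp. intros u Hu. symmetry. apply RInt_C_comp. exact Hu. }
  apply CD_pair; simpl.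
  - apply (comp_deriv_RInt (fun u t => fst (F u t)) (fun u t => fst (D u t))); auto.
    + revert Hd. apply filter_imp. intros u Hu t. apply CD_fst. apply Hu.
    + intros t Ht. apply Cc_fst. auto.
    + revert Hex. apply filter_imp. intros u Hu. apply ex_RInt_C_fst. exact Hu.
  - apply (comp_deriv_RInt (fun u t => snd (F u t)) (fun u t => snd (D u t))); auto.
    + revert Hd. apply filter_imp. intros u Hu t. apply CD_snd. apply Hu.
    + intros t Ht. apply Cc_snd. auto.
    + revert Hex. apply filter_imp. intros u Hu. apply ex_RInt_C_snd. exact Hu.
Qed.
Open Scope R_scope.

Lemma RInt_CD (f df : R -> C) a b : a <= b ->
  (forall t, a <= t <= b -> CD f t (df t)) -> (forall t, a <= t <= b -> continuous df t) ->
  is_RInt (V:=C_R_CompleteNormedModule) df a b (Cminus (f b) (f a)).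
Proof.
  intros Hab Hd Hc.
  apply (is_RInt_derive (V:=C_R_CompleteNormedModule) f df a b).
  - rewrite Rmin_left, Rmax_right by lra. exact Hd.
  - rewrite Rmin_left, Rmax_right by lra. exact Hc.
Qed.

Definition gam (r th : R) : C := (r * cos th, r * sin th)%R.
Definition Eu (th : R) : C := (cos th, sin th).

Lemma gam_eq r th : gam r th = Cmult (RtoC r) (Eu th).
Proof. unfold gam, Eu, RtoC, Cmult; simpl. f_equal; ring. Qed.

Lemma CD_gam_th r th : CD (fun t => gam r t) th (Cmult Ci (gam r th)).
Proof.
  apply CD_pair; unfold gam; simpl.
  - eapply Rd_eq. apply Rmult_d. apply Rconst_d. apply Rcos_d. apply is_derive_id. simpl. unfold one; simpl. ring.
  - eapply Rd_eq. apply Rmult_d. apply Rconst_d. apply Rsin_d. apply is_derive_id. simpl. unfold one; simpl. ring.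
Qed.

Lemma CD_gam_r r th : CD (fun u => gam u th) r (Eu th).
Proof.
  apply CD_pair; unfold gam, Eu; simpl.
  - eapply Rd_eq. apply Rmult_d. apply is_derive_id. apply Rconst_d. simpl. unfold one; simpl. ring.
  - eapply Rd_eq. apply Rmult_d. apply is_derive_id. apply Rconst_d. simpl. unfold one; simpl. ring.
Qed.

Lemma CD_Eu th : CD Eu th (Cmult Ci (Eu th)).
Proof.
  apply CD_pair; unfold Eu; simpl.
  - eapply Rd_eq. apply Rcos_d. apply is_derive_id. simpl. unfold one; simpl. ring.
  - eapply Rd_eq. apply Rsin_d. apply is_derive_id. simpl. unfold one; simpl. ring.
Qed.

Lemma Cmod_gam r th : 0 <= r -> Cmod (gam r th) = r.
Proof.
  intros Hr. unfold gam, Cmod; simpl.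
  replace (r * cos th * (r * cos th * 1) + r * sin th * (r * sin th * 1)) with (r * r * (Rsqr (sin th) + Rsqr (cos th))) by (unfold Rsqr; ring).
  rewrite sin2_cos2, Rmult_1_r. apply sqrt_square. exact Hr.
Qed.

Section ContU.
Context {U : UniformSpace}.

Lemma Cc_gam (a b : U -> R) x : continuous a x -> continuous b x -> continuous (fun y => gam (a y) (b y)) x.
Proof.
  intros Ha Hb. apply Cc_pair; unfold gam; simpl; apply Rc_mult; auto.
  apply (Rc_comp _ cos); auto. apply Rc_cos.
  apply (Rc_comp _ sin); auto. apply Rc_sin.
Qed.

Lemma Cc_Eu (b : U -> R) x : continuous b x -> continuous (fun y => Eu (b y)) x.
Proof.
  intros Hb. apply Cc_pair; unfold Eu; simpl.
  apply (Rc_comp _ cos); auto. apply Rc_cos.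
  apply (Rc_comp _ sin); auto. apply Rc_sin.
Qed.

Lemma Cc_node_prod ys (f : U -> C) x : continuous f x -> continuous (fun y => node_prod ys (f y)) x.
Proof.
  intros Hf. induction ys as [|a ys IH]; simpl.
  - apply Cc_const.
  - apply Cc_mult; auto. apply Cc_minus; auto. apply Cc_const.
Qed.
End ContU.

Lemma Rc_fst2 (x : R * R) : continuous (fun p : R * R => fst p) x.
Proof. destruct x. apply (@continuous_fst R_UniformSpace R_UniformSpace). Qed.
Lemma Rc_snd2 (x : R * R) : continuous (fun p : R * R => snd p) x.
Proof. destruct x. apply (@continuous_snd R_UniformSpace R_UniformSpace). Qed.
Lemma Rc_id (x : R) : continuous (fun t : R => t) x.
Proof. apply continuous_id. Qed.

Fixpoint node_dprod (ys : list C) (z : C) : C :=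
  match ys with
  | nil => RtoC 0
  | y :: ys' => Cplus (node_prod ys' z) (Cmult (Cminus z y) (node_dprod ys' z))
  end.

Lemma CD_node_prod ys (f : R -> C) s a : CD f s a ->
  CD (fun t => node_prod ys (f t)) s (Cmult (node_dprod ys (f s)) a).
Proof.
  intros Hf. induction ys as [|y ys IH]; simpl.
  - eapply CD_eq. apply CD_const. ring.
  - eapply CD_eq. apply CD_mult. apply CD_minus. exact Hf. apply CD_const. exact IH.
    cbv beta; ring.
Qed.

Definition maxmod (ys : list C) : R := fold_right (fun y acc => Rmax (Cmod y) acc) 0 ys.

Lemma maxmod_ge ys y : In y ys -> Cmod y <= maxmod ys.
Proof.
  induction ys as [|a ys IH]; simpl; [tauto|].
  intros [->|H]. apply Rmax_l. eapply Rle_trans. apply IH; auto. apply Rmax_r.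
Qed.

Lemma maxmod_nonneg ys : 0 <= maxmod ys.
Proof. induction ys; simpl. lra. eapply Rle_trans. exact IHys. apply Rmax_r. Qed.

Lemma Cmult_nz (a b : C) : a <> RtoC 0 -> b <> RtoC 0 -> Cmult a b <> RtoC 0.
Proof.
  intros Ha Hb H. apply Cmod_gt_0 in Ha. apply Cmod_gt_0 in Hb.
  assert (Cmod (Cmult a b) = 0) by (rewrite H; apply Cmod_0).
  rewrite Cmod_mult in H0. nra.
Qed.

Lemma node_prod_nz ys z : maxmod ys < Cmod z -> node_prod ys z <> RtoC 0.
Proof.
  induction ys as [|y ys IH]; simpl; intros H.
  - intros E. injection E. lra.
  - apply Cmult_nz.
    + intros E. assert (z = y).
      { replace z with (Cplus (Cminus z y) y) by ring. rewrite E. ring. }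
      subst. pose proof (Rmax_l (Cmod y) (maxmod ys)). lra.
    + apply IH. pose proof (Rmax_r (Cmod y) (maxmod ys)). lra.
Qed.

Lemma node_prod_gam_nz ys r th : maxmod ys < r -> node_prod ys (gam r th) <> RtoC 0.
Proof.
  intros H. apply node_prod_nz. rewrite Cmod_gam. auto. pose proof (maxmod_nonneg ys). lra.
Qed.

Lemma node_radius_gt ys : maxmod ys < node_radius ys.
Proof.
  unfold node_radius. enough (maxmod ys <= fold_right (fun y acc => Cmod y + acc) 0 ys) by lra.
  induction ys as [|y ys IH]; simpl. lra.
  apply Rmax_lub. pose proof (Cmod_ge_0 y). 
  assert (0 <= fold_right (fun (y0 : C) (acc : R) => Cmod y0 + acc) 0 ys).
  { clear IH. induction ys; simpl. lra. pose proof (Cmod_ge_0 a). lra. }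
  lra. pose proof (Cmod_ge_0 y). lra.
Qed.
Open Scope R_scope.

Lemma Cc_node_dprod {U : UniformSpace} ys (f : U -> C) x : continuous f x -> continuous (fun y => node_dprod ys (f y)) x.
Proof.
  intros Hf. induction ys as [|a ys IH]; simpl.
  - apply Cc_const.
  - apply Cc_plus. apply Cc_node_prod; auto. apply Cc_mult; auto. apply Cc_minus; auto. apply Cc_const.
Qed.

Definition holo (f f' : C -> C) :=
  (forall phi phi' s, CD phi s phi' -> CD (fun t => f (phi t)) s (Cmult (f' (phi s)) phi')) /\
  (forall z, continuous f z) /\ (forall z, continuous f' z).

Definition ig (f : C -> C) (ys : list C) (r th : R) : C :=
  Cmult (Cdiv (f (gam r th)) (node_prod ys (gam r th))) (Cmult Ci (gam r th)).

Definition cst : C := Cinv (Cmult (RtoC (2 * PI)) Ci).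

Definition J (f : C -> C) (ys : list C) (r : R) : C :=
  Cmult cst (@RInt C_R_CompleteNormedModule (ig f ys r) 0 (2 * PI)).

Lemma divdiff_J f ys : divdiff f ys = J f ys (node_radius ys).
Proof. reflexivity. Qed.

Ltac cc := repeat match goal with
 | |- continuous (fun y => Cmult (@?a y) (@?b y)) _ => apply (Cc_mult a b)
 | |- continuous (fun y => Cplus (@?a y) (@?b y)) _ => apply (Cc_plus a b)
 | |- continuous (fun y => Cminus (@?a y) (@?b y)) _ => apply (Cc_minus a b)
 | |- continuous (fun y => Copp (@?a y)) _ => apply (Cc_opp a)
 | |- continuous (fun y => Cexp (@?a y)) _ => apply (Cc_exp a)
 | |- continuous (fun y => RtoC (@?a y)) _ => apply (Cc_RtoC a)
 | |- continuous (fun y => gam (@?a y) (@?b y)) _ => apply (Cc_gam a b)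
 | |- continuous (fun y => Eu (@?a y)) _ => apply (Cc_Eu a)
 | |- continuous (gam ?r) _ => apply (Cc_gam (fun _ => r) (fun t => t))
 | |- continuous Eu _ => apply (Cc_Eu (fun t => t))
 | |- continuous (fun y => node_prod ?ys (@?a y)) _ => apply (Cc_node_prod ys a)
 | |- continuous (fun y => node_dprod ?ys (@?a y)) _ => apply (Cc_node_dprod ys a)
 | |- continuous (fun p => fst p) _ => apply Rc_fst2
 | |- continuous (fun p => snd p) _ => apply Rc_snd2
 | |- continuous (fun t => t) _ => apply Rc_id
 | |- continuous (fun t => - (@?a t)) _ => apply (Rc_opp a)
 | |- continuous (fun _ => ?c) _ => first [apply Cc_const | apply Rc_const]
 | H : continuous ?g ?x |- continuous ?g ?x => exact H
 end.

Section F1.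
Variables (f f' : C -> C) (Hh : holo f f') (ys : list C).


Definition Dr (u t : R) : C :=
  let g := gam u t in let e := Eu t in
  Cplus (Cmult (Cminus (Cmult (f' g) (Cinv (node_prod ys g))) (Cmult (Cmult (f g) (node_dprod ys g)) (Cinv (Cmult (node_prod ys g) (node_prod ys g)))))
          (Cmult e (Cmult Ci g)))
        (Cmult (Cmult (f g) (Cinv (node_prod ys g))) (Cmult Ci e)).

Definition kk (u t : R) : C := Cmult (Cmult (f (gam u t)) (Cinv (node_prod ys (gam u t)))) (Eu t).

Lemma Cc_f {U : UniformSpace} (h : U -> C) x : continuous h x -> continuous (fun y => f (h y)) x.
Proof. intros. apply (Cc_comp h f); auto. apply Hh. Qed.
Lemma Cc_f' {U : UniformSpace} (h : U -> C) x : continuous h x -> continuous (fun y => f' (h y)) x.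
Proof. intros. apply (Cc_comp h f'); auto. apply Hh. Qed.

Lemma Cc_Pinv {U : UniformSpace} (a b : U -> R) x : continuous a x -> continuous b x -> maxmod ys < a x ->
  continuous (fun y => Cinv (node_prod ys (gam (a y) (b y)))) x.
Proof.
  intros Ha Hb Hm. apply Cc_inv. apply Cc_node_prod. apply Cc_gam; auto.
  apply node_prod_gam_nz; auto.
Qed.

Lemma Cc_Pinv2 {U : UniformSpace} (a b : U -> R) x : continuous a x -> continuous b x -> maxmod ys < a x ->
  continuous (fun y => Cinv (Cmult (node_prod ys (gam (a y) (b y))) (node_prod ys (gam (a y) (b y))))) x.
Proof.
  intros Ha Hb Hm. apply Cc_inv. apply Cc_mult; apply Cc_node_prod; apply Cc_gam; auto.
  apply Cmult_nz; apply node_prod_gam_nz; auto.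
Qed.

Lemma Dr_cont2 r th : maxmod ys < r -> continuous (fun p : R * R => Dr (fst p) (snd p)) (r, th).
Proof.
  intros Hm. unfold Dr.
  assert (Hf1 : continuous (fun p : R * R => f (gam (fst p) (snd p))) (r, th)) by (apply Cc_f; cc).
  assert (Hf2 : continuous (fun p : R * R => f' (gam (fst p) (snd p))) (r, th)) by (apply Cc_f'; cc).
  assert (Hi1 := Cc_Pinv (fun p : R * R => fst p) (fun p : R * R => snd p) (r, th) (Rc_fst2 _) (Rc_snd2 _) Hm). cbv beta in *.
  assert (Hi2 := Cc_Pinv2 (fun p : R * R => fst p) (fun p : R * R => snd p) (r, th) (Rc_fst2 _) (Rc_snd2 _) Hm). cbv beta in *.
  cc; auto.
Qed.

Lemma Dr_cont1 r th : maxmod ys < r -> continuous (Dr r) th.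
Proof.
  intros Hm. unfold Dr.
  assert (Hf1 : continuous (fun t : R => f (gam r t)) th) by (apply Cc_f; cc).
  assert (Hf2 : continuous (fun t : R => f' (gam r t)) th) by (apply Cc_f'; cc).
  assert (Hi1 := Cc_Pinv (fun _ : R => r) (fun t : R => t) th (Rc_const _ _) (Rc_id _) Hm). cbv beta in *.
  assert (Hi2 := Cc_Pinv2 (fun _ : R => r) (fun t : R => t) th (Rc_const _ _) (Rc_id _) Hm). cbv beta in *.
  cc; auto.
Qed.

Lemma ig_cont r th : maxmod ys < r -> continuous (ig f ys r) th.
Proof.
  intros Hm. unfold ig, Cdiv.
  assert (Hf1 : continuous (fun t : R => f (gam r t)) th) by (apply Cc_f; cc).
  assert (Hi1 := Cc_Pinv (fun _ : R => r) (fun t : R => t) th (Rc_const _ _) (Rc_id _) Hm). cbv beta in *.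
  cc; auto.
Qed.

Lemma ig_dr u t : maxmod ys < u -> CD (fun v => ig f ys v t) u (Dr u t).
Proof.
  intros Hm. unfold ig, Cdiv.
  eapply CD_eq.
  apply CD_mult. apply CD_mult. apply (proj1 Hh). apply CD_gam_r.
  apply CD_inv. apply CD_node_prod. apply CD_gam_r. apply node_prod_gam_nz; auto.
  apply CD_mult. apply CD_const. apply CD_gam_r.
  unfold Dr. cbv beta. field.
  apply node_prod_gam_nz; auto.
Qed.

Lemma kk_dth u t : maxmod ys < u -> CD (kk u) t (Dr u t).
Proof.
  intros Hm. unfold kk.
  eapply CD_eq.
  apply CD_mult. apply CD_mult. apply (proj1 Hh). apply CD_gam_th.
  apply CD_inv. apply CD_node_prod. apply CD_gam_th. apply node_prod_gam_nz; auto.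
  apply CD_Eu.
  unfold Dr. cbv beta. rewrite !gam_eq. field.
  rewrite <- !gam_eq. apply node_prod_gam_nz; auto.
Qed.

Lemma RInt_Dr_zero u : maxmod ys < u -> @RInt C_R_CompleteNormedModule (Dr u) 0 (2 * PI) = RtoC 0.
Proof.
  intros Hm. apply is_RInt_unique.
  assert (H := RInt_CD (kk u) (Dr u) 0 (2 * PI)).
  replace (RtoC 0) with (Cminus (kk u (2 * PI)) (kk u 0)).
  apply H. pose proof PI_RGT_0; lra.
  intros t _. apply kk_dth; auto.
  intros t _. apply Dr_cont1; auto.
  unfold kk, gam, Eu. rewrite cos_2PI, sin_2PI, cos_0, sin_0. ring.
Qed.

Lemma Phi_deriv u : maxmod ys < u ->
  CD (fun v => @RInt C_R_CompleteNormedModule (ig f ys v) 0 (2 * PI)) u (RtoC 0).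
Proof.
  intros Hm. rewrite <- (RInt_Dr_zero u Hm).
  assert (Hloc : locally u (fun v => maxmod ys < v)).
  { assert (Hd : 0 < u - maxmod ys) by lra. exists (mkposreal _ Hd). intros v Hv.
    simpl in Hv. unfold ball in Hv; simpl in Hv. unfold AbsRing_ball, abs, minus, plus, opp in Hv; simpl in Hv.
    apply Rabs_lt_between in Hv. lra. }
  apply CD_RInt.
  - pose proof PI_RGT_0; lra.
  - revert Hloc. apply filter_imp. intros v Hv t. apply ig_dr; auto.
  - intros t _. apply Dr_cont2; auto.
  - revert Hloc. apply filter_imp. intros v Hv t _. apply ig_cont; auto.
Qed.

Lemma F1_RInt r1 r2 : maxmod ys < r1 -> maxmod ys < r2 ->
  @RInt C_R_CompleteNormedModule (ig f ys r1) 0 (2 * PI) = @RInt C_R_CompleteNormedModule (ig f ys r2) 0 (2 * PI).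
Proof.
  intros H1 H2.
  assert (Hgen : forall a b, maxmod ys < a -> a < b ->
     @RInt C_R_CompleteNormedModule (ig f ys a) 0 (2 * PI) = @RInt C_R_CompleteNormedModule (ig f ys b) 0 (2 * PI)).
  { intros a b Ha Hab.
    apply (eq_is_derive (V:=C_R_NormedModule) (fun v => @RInt C_R_CompleteNormedModule (ig f ys v) 0 (2 * PI)) a b); auto.
    intros t Ht. apply Phi_deriv. lra. }
  destruct (Rtotal_order r1 r2) as [Hlt|[Heq|Hgt]].
  - apply Hgen; auto.
  - subst; reflexivity.
  - symmetry. apply Hgen; auto.
Qed.

Lemma F1 r1 r2 : maxmod ys < r1 -> maxmod ys < r2 -> J f ys r1 = J f ys r2.
Proof. intros. unfold J. f_equal. apply F1_RInt; auto. Qed.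

End F1.
Open Scope R_scope.

Lemma Cc_idC (z : C) : continuous (fun w : C => w) z.
Proof. apply continuous_id. Qed.

Definition ee (c : C) (z : C) : C := Cexp (Cmult c z).

Lemma holo_ee c : holo (ee c) (fun z => Cmult c (ee c z)).
Proof.
  split; [|split].
  - intros phi phi' s H. unfold ee. eapply CD_eq. apply CD_exp. apply CD_mult. apply CD_const. exact H.
    cbv beta. ring.
  - intros z. unfold ee. apply (Cc_exp (fun w => Cmult c w)). apply Cc_mult. apply Cc_const. apply Cc_idC.
  - intros z. unfold ee. apply Cc_mult. apply Cc_const. apply (Cc_exp (fun w => Cmult c w)). apply Cc_mult. apply Cc_const. apply Cc_idC.
Qed.

Lemma holo_mult f f' g g' : holo f f' -> holo g g' ->
  holo (fun z => Cmult (f z) (g z)) (fun z => Cplus (Cmult (f' z) (g z)) (Cmult (f z) (g' z))).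
Proof.
  intros [Hf [Cf Cf']] [Hg [Cg Cg']]. split; [|split].
  - intros phi phi' s H. eapply CD_eq. apply CD_mult. apply Hf; eauto. apply Hg; eauto. cbv beta. ring.
  - intros z. apply Cc_mult; auto.
  - intros z. apply Cc_plus; apply Cc_mult; auto.
Qed.

Lemma holo_opp_id : holo (fun z => Copp z) (fun _ => Copp (RtoC 1)).
Proof.
  split; [|split].
  - intros phi phi' s H. eapply CD_eq. apply CD_opp. exact H. ring.
  - intros z. apply Cc_opp. apply Cc_idC.
  - intros z. apply Cc_const.
Qed.

Definition f2 (c : C) (z : C) : C := Cmult (ee c z) (Copp z).

Lemma holo_f2 c : holo (f2 c) (fun z => Cplus (Cmult (Cmult c (ee c z)) (Copp z)) (Cmult (ee c z) (Copp (RtoC 1)))).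
Proof. apply (holo_mult _ _ _ _ (holo_ee c) holo_opp_id). Qed.

Lemma exp_dd_J t ys : exp_dd t ys = J (ee (RtoC t)) ys (node_radius ys).
Proof. reflexivity. Qed.

Lemma RtoC_m1 : RtoC (Ropp 1) = Copp (RtoC 1).
Proof. unfold RtoC, Copp; simpl. f_equal. ring. Qed.

Lemma dtau_deriv (ys : list C) (tau : R) :
  CD (fun t => exp_dd (- t) ys) tau (J (f2 (RtoC (- tau))) ys (node_radius ys)).
Proof.
  set (r := node_radius ys).
  assert (Hm : maxmod ys < r) by apply node_radius_gt.
  unfold J. 
  apply (CD_ext (fun t => Cmult cst (@RInt C_R_CompleteNormedModule (ig (ee (RtoC (-t))) ys r) 0 (2 * PI)))).
  { intros t. reflexivity. }
  eapply CD_eq. apply CD_mult. apply CD_const.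
  apply (CD_RInt (fun t th => ig (ee (RtoC (-t))) ys r th) (fun t th => ig (f2 (RtoC (-t))) ys r th)).
  - pose proof PI_RGT_0; lra.
  - apply filter_forall. intros u th. unfold ig, Cdiv, f2, ee.
    eapply CD_eq. apply CD_mult. apply CD_mult. apply CD_exp. apply CD_mult.
    apply CD_RtoC. apply Ropp_d. apply is_derive_id. apply CD_const. apply CD_const. apply CD_const. 
    cbv beta. unfold one; simpl. rewrite RtoC_m1. ring.
  - intros th _. unfold ig, Cdiv, f2, ee.
    assert (Hi1 := Cc_Pinv ys (fun _ : R * R => r) (fun p : R * R => snd p) (tau, th) (Rc_const _ _) (Rc_snd2 _) Hm).
    cbv beta in Hi1. cc.
  - apply filter_forall. intros u th _. apply (ig_cont _ _ (holo_ee _)); auto.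
  - cbv beta. match goal with |- Cplus (Cmult _ _) ?X = _ => transitivity X; [ring|reflexivity] end.
Qed.
Open Scope R_scope.

Notation CRInt := (@RInt C_R_CompleteNormedModule).
Notation CisRInt := (@is_RInt C_R_NormedModule).

Lemma is_RInt_Cscal (k : R -> C) a b (I c : C) : CisRInt k a b I ->
  CisRInt (fun t => Cmult c (k t)) a b (Cmult c I).
Proof.
  intros H.
  assert (H1 := is_RInt_fct_extend_fst (U:=R_NormedModule) (V:=R_NormedModule) k a b I H).
  assert (H2 := is_RInt_fct_extend_snd (U:=R_NormedModule) (V:=R_NormedModule) k a b I H).
  destruct c as [c1 c2]. destruct I as [I1 I2]. simpl in H1, H2.
  apply (is_RInt_fct_extend_pair (U:=R_NormedModule) (V:=R_NormedModule)); simpl.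
  - apply (is_RInt_minus (V:=R_NormedModule) (fun t => c1 * fst (k t)) (fun t => c2 * snd (k t))).
    apply (is_RInt_scal (V:=R_NormedModule) _ a b c1 I1 H1).
    apply (is_RInt_scal (V:=R_NormedModule) _ a b c2 I2 H2).
  - apply (is_RInt_plus (V:=R_NormedModule) (fun t => c1 * snd (k t)) (fun t => c2 * fst (k t))).
    apply (is_RInt_scal (V:=R_NormedModule) _ a b c1 I2 H2).
    apply (is_RInt_scal (V:=R_NormedModule) _ a b c2 I1 H1).
Qed.

Lemma is_RInt_Cminus (f g : R -> C) a b (If Ig : C) : CisRInt f a b If -> CisRInt g a b Ig ->
  CisRInt (fun t => Cminus (f t) (g t)) a b (Cminus If Ig).
Proof. intros. apply (is_RInt_minus (V:=C_R_NormedModule)); auto. Qed.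

Lemma is_RInt_Cplus (f g : R -> C) a b (If Ig : C) : CisRInt f a b If -> CisRInt g a b Ig ->
  CisRInt (fun t => Cplus (f t) (g t)) a b (Cplus If Ig).
Proof. intros. apply (is_RInt_plus (V:=C_R_NormedModule)); auto. Qed.

Lemma CRInt_correct (f : R -> C) a b : a <= b -> (forall t, a <= t <= b -> continuous f t) ->
  CisRInt f a b (CRInt f a b).
Proof.
  intros Hab H. apply (RInt_correct (V:=C_R_CompleteNormedModule)). apply ex_RInt_Ccont.
  rewrite Rmin_left, Rmax_right by lra. exact H.
Qed.

Lemma norm_CRInt_le (f : R -> C) a b (I : C) (K : R) : a <= b -> CisRInt f a b I ->
  (forall t, a <= t <= b -> Cmod (f t) <= K) -> Cmod I <= (b - a) * K.
Proof.
  intros Hab HI HK. rewrite <- normCR.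
  apply (norm_RInt_le (V:=C_R_NormedModule) f (fun _ => K) a b I ((b - a) * K)); auto.
  - intros t Ht. rewrite normCR. auto.
  - apply (is_RInt_const (V:=R_NormedModule)).
Qed.

Lemma Rc_Cmod {U : UniformSpace} (f : U -> C) x : continuous f x -> continuous (fun y => Cmod (f y)) x.
Proof.
  intros Hf. unfold Cmod. apply (Rc_comp _ sqrt).
  - apply Rc_plus; simpl; apply Rc_mult; try apply Rc_mult; try apply Rc_const;
    first [apply Cc_fst | apply Cc_snd]; auto.
  - apply (continuous_sqrt_comp (fun t => t)). apply continuous_id.
Qed.

Lemma cont_bound (B : R -> C) a b : a <= b -> (forall t, continuous B t) ->
  exists M, 0 <= M /\ forall t, a <= t <= b -> Cmod (B t) <= M.
Proof.
  intros Hab HB.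
  destruct (continuity_ab_maj (fun t => Cmod (B t)) a b Hab) as [m [Hm _]].
  - intros c _. apply continuity_pt_filterlim. apply (Rc_Cmod B c (HB c)).
  - exists (Cmod (B m)). split. apply Cmod_ge_0. exact Hm.
Qed.

Lemma Cderiv_of_bound (g : C -> C) (z0 l : C) (K d0 : R) : 0 < d0 ->
  (forall z, Cmod (Cminus z z0) < d0 ->
     Cmod (Cminus (Cminus (g z) (g z0)) (Cmult (Cminus z z0) l)) <= K * (Cmod (Cminus z z0)) ^ 2) ->
  @is_derive C_AbsRing C_NormedModule g z0 l.
Proof.
  intros Hd0 HK. split.
  - apply is_linear_scal_l.
  - intros x Hx. apply (is_filter_lim_locally_unique (K:=C_AbsRing) (V:=AbsRing_NormedModule C_AbsRing)) in Hx. subst x.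
    intros eps.
    set (K' := Rabs K + 1).
    assert (HK' : 0 < K') by (unfold K'; pose proof (Rabs_pos K); lra).
    assert (Hd : 0 < Rmin d0 (eps / K')).
    { apply Rmin_pos; auto. apply Rdiv_lt_0_compat. apply cond_pos. exact HK'. }
    exists (mkposreal _ Hd). intros z Hz.
    change (ball z0 (Rmin d0 (eps / K')) z) with (Cmod (Cminus z z0) < Rmin d0 (eps / K')) in Hz.
    change (Cmod (Cminus (Cminus (g z) (g z0)) (Cmult (Cminus z z0) l)) <= eps * Cmod (Cminus z z0)).
    assert (Hz1 : Cmod (Cminus z z0) < d0) by (eapply Rlt_le_trans; [exact Hz| apply Rmin_l]).
    assert (Hz2 : Cmod (Cminus z z0) < eps / K') by (eapply Rlt_le_trans; [exact Hz| apply Rmin_r]).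
    eapply Rle_trans. apply HK; auto.
    set (m := Cmod (Cminus z z0)) in *.
    assert (0 <= m) by apply Cmod_ge_0.
    assert (K * m ^ 2 <= K' * m * m).
    { unfold K'. simpl. rewrite Rmult_1_r. pose proof (Rle_abs K).
      assert (0 <= m * m) by nra. nra. }
    assert (K' * m <= eps).
    { apply Rmult_lt_compat_l with (r := K') in Hz2; auto.
      replace (K' * (eps / K')) with (pos eps) in Hz2 by (field; lra). lra. }
    assert (K' * m * m <= eps * m) by (apply Rmult_le_compat_r; auto).
    lra.
Qed.
Open Scope R_scope.

Lemma node_prod_app l1 l2 w : node_prod (l1 ++ l2) w = Cmult (node_prod l1 w) (node_prod l2 w).
Proof. induction l1 as [|a l1 IH]; simpl. ring. rewrite IH. ring. Qed.

Lemma nodes_S x q : nodes x (S q) = nodes x q ++ x (S q) :: nil.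
Proof. unfold nodes. rewrite (seq_S (S q) 0). rewrite map_app. reflexivity. Qed.

Lemma nodes_ext x y q : (forall k, (k <= q)%nat -> x k = y k) -> nodes x q = nodes y q.
Proof.
  intros H. unfold nodes. apply map_ext_in. intros k Hk. apply in_seq in Hk. apply H. lia.
Qed.

Lemma node_prod_upd x q i z w : (i <= q)%nat ->
  Cmult (node_prod (nodes (upd x i z) q) w) (Cminus w (x i)) = Cmult (node_prod (nodes x q) w) (Cminus w z).
Proof.
  revert i. induction q as [|q IH]; intros i Hi.
  - assert (i = 0)%nat by lia. subst. unfold nodes, upd; simpl. ring.
  - rewrite !nodes_S, !node_prod_app.
    destruct (Nat.eq_dec i (S q)) as [->|Hne].
    + rewrite (nodes_ext (upd x (S q) z) x q).
      2:{ intros k Hk. unfold upd. destruct (Nat.eqb_spec k (S q)); [lia|reflexivity]. }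
      unfold upd at 1. rewrite Nat.eqb_refl. simpl. ring.
    + assert (Hu : upd x i z (S q) = x (S q)).
      { unfold upd. destruct (Nat.eqb_spec (S q) i); [lia|reflexivity]. }
      rewrite Hu. 
      transitivity (Cmult (Cmult (node_prod (nodes (upd x i z) q) w) (Cminus w (x i))) (node_prod (x (S q) :: nil) w)).
      ring. rewrite IH by lia. ring.
Qed.

Lemma in_nodes_upd x q i z y : In y (nodes (upd x i z) q) -> y = z \/ In y (nodes x q).
Proof.
  unfold nodes. intros H. apply in_map_iff in H. destruct H as [k [Hk Hin]].
  unfold upd in Hk. destruct (Nat.eqb k i). left; auto. right. subst. apply in_map. auto.
Qed.

Lemma maxmod_le ys M : 0 <= M -> (forall y, In y ys -> Cmod y <= M) -> maxmod ys <= M.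
Proof.
  induction ys as [|a ys IH]; simpl; intros HM H. lra.
  apply Rmax_lub. apply H; auto. apply IH; auto.
Qed.

Lemma in_nodes x q i : (i <= q)%nat -> In (x i) (nodes x q).
Proof. intros. unfold nodes. apply in_map. apply in_seq. lia. Qed.

Lemma Cmod_rev (a b : C) : Cmod a - Cmod b <= Cmod (Cminus a b).
Proof.
  assert (Cmod a <= Cmod (Cminus a b) + Cmod b).
  { replace a with (Cplus (Cminus a b) b) at 1 by ring. apply Cmod_triangle. }
  lra.
Qed.

Lemma Cmod_inv_le (w : C) (L : R) : 0 < L -> L <= Cmod w -> Cmod (Cinv w) <= / L.
Proof.
  intros HL Hw. assert (Hnz : w <> RtoC 0).
  { intros E. rewrite E, Cmod_0 in Hw. lra. }
  rewrite Cmod_inv by auto. apply Rinv_le_contravar; auto.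
Qed.
Open Scope R_scope.

Lemma nz_of_mod (w : C) : 0 < Cmod w -> w <> RtoC 0.
Proof. intros H E. rewrite E, Cmod_0 in H. lra. Qed.

Section DX.
Variables (x : nat -> C) (q i : nat) (tau : R) (Hi : (i <= q)%nat).

Definition XX := nodes x q.
Definition rho := node_radius XX + 1.
Definition e0 := ee (RtoC (- tau)).
Definition z0 := x i.

Definition Bf (th : R) : C :=
  Cmult (Cmult (e0 (gam rho th)) (Cminus (gam rho th) z0))
        (Cmult (Cmult Ci (gam rho th)) (Cinv (node_prod XX (gam rho th)))).
Definition Fz (z : C) (th : R) : C := Cmult (Bf th) (Cinv (Cminus (gam rho th) z)).
Definition F2 (th : R) : C := Cmult (Bf th) (Cinv (Cmult (Cminus (gam rho th) z0) (Cminus (gam rho th) z0))).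

Lemma z0_bound : Cmod z0 + 1 < rho.
Proof.
  unfold rho, z0. pose proof (node_radius_gt XX). pose proof (maxmod_ge XX (x i) (in_nodes x q i Hi)).
  unfold XX in *. lra.
Qed.

Lemma rho_pos : 0 < rho.
Proof. pose proof z0_bound. pose proof (Cmod_ge_0 z0). lra. Qed.

Lemma maxX : maxmod XX < rho.
Proof. unfold rho. pose proof (node_radius_gt XX). lra. Qed.

Lemma gam_far z th : Cmod (Cminus z z0) < 1/2 -> 1/2 <= Cmod (Cminus (gam rho th) z).
Proof.
  intros Hz. pose proof z0_bound. pose proof (Cmod_rev (gam rho th) z).
  rewrite Cmod_gam in H0 by (pose proof rho_pos; lra).
  assert (Cmod z <= Cmod (Cminus z z0) + Cmod z0).
  { replace z with (Cplus (Cminus z z0) z0) at 1 by ring. apply Cmod_triangle. }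
  lra.
Qed.

Lemma maxY z : Cmod (Cminus z z0) < 1/2 -> maxmod (nodes (upd x i z) q) < rho.
Proof.
  intros Hz. pose proof z0_bound. pose proof maxX.
  assert (Cmod z <= Cmod (Cminus z z0) + Cmod z0).
  { replace z with (Cplus (Cminus z z0) z0) at 1 by ring. apply Cmod_triangle. }
  assert (HM : maxmod (nodes (upd x i z) q) <= Rmax (maxmod XX) (Cmod z)).
  { apply maxmod_le. pose proof (maxmod_nonneg XX). eapply Rle_trans; [exact H2|apply Rmax_l].
    intros y Hy. apply in_nodes_upd in Hy. destruct Hy as [->|Hy]. apply Rmax_r.
    eapply Rle_trans. apply maxmod_ge. exact Hy. apply Rmax_l. }
  eapply Rle_lt_trans. exact HM. apply Rmax_lub_lt; lra.
Qed.

Lemma Cc_Bf th : continuous Bf th.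
Proof.
  unfold Bf, e0, ee.
  assert (Hi1 := Cc_Pinv XX (fun _ : R => rho) (fun t : R => t) th (Rc_const _ _) (Rc_id _) maxX).
  cbv beta in Hi1. cc.
Qed.

Lemma Cc_Fz z th : Cmod (Cminus z z0) < 1/2 -> continuous (Fz z) th.
Proof.
  intros Hz. unfold Fz. apply Cc_mult. apply Cc_Bf.
  apply Cc_inv. cc. apply nz_of_mod. pose proof (gam_far z th Hz). lra.
Qed.

Lemma Cc_F2 th : continuous F2 th.
Proof.
  unfold F2. apply Cc_mult. apply Cc_Bf.
  assert (Hz : Cmod (Cminus z0 z0) < 1/2) by (replace (Cminus z0 z0) with (RtoC 0) by ring; rewrite Cmod_0; lra).
  apply Cc_inv. cc. apply Cmult_nz; apply nz_of_mod; pose proof (gam_far z0 th Hz); lra.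
Qed.

Lemma G_repr z : Cmod (Cminus z z0) < 1/2 ->
  exp_dd (- tau) (nodes (upd x i z) q) = Cmult cst (CRInt (Fz z) 0 (2 * PI)).
Proof.
  intros Hz. rewrite exp_dd_J.
  rewrite (F1 _ _ (holo_ee _) _ (node_radius (nodes (upd x i z) q)) rho).
  2: apply node_radius_gt. 2: apply maxY; auto.
  unfold J. f_equal. apply RInt_ext. intros th _. match goal with |- ?a = ?b => change (@eq C a b) end.
  unfold ig, Fz, Bf, Cdiv. fold e0.
  set (g := gam rho th).
  assert (Hupd := node_prod_upd x q i z g Hi). fold z0 in Hupd. fold XX in Hupd.
  assert (H1 : node_prod XX g <> RtoC 0) by (apply node_prod_gam_nz; apply maxX).
  assert (H2 : node_prod (nodes (upd x i z) q) g <> RtoC 0) by (apply node_prod_gam_nz; apply maxY; auto).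
  assert (H3 : Cminus g z <> RtoC 0) by (apply nz_of_mod; pose proof (gam_far z th Hz); unfold g; lra).
  assert (Hz0 : Cmod (Cminus z0 z0) < 1/2) by (replace (Cminus z0 z0) with (RtoC 0) by ring; rewrite Cmod_0; lra).
  assert (H4 : Cminus g z0 <> RtoC 0) by (apply nz_of_mod; pose proof (gam_far z0 th Hz0); unfold g; lra).
  assert (HPY : node_prod (nodes (upd x i z) q) g = Cmult (Cmult (node_prod XX g) (Cminus g z)) (Cinv (Cminus g z0))).
  { rewrite <- Hupd. field. exact H4. }
  rewrite HPY. field. repeat split; auto.
Qed.

Lemma D_repr : J e0 (XX ++ z0 :: nil) rho = Cmult cst (CRInt F2 0 (2 * PI)).
Proof.
  unfold J. f_equal. apply RInt_ext. intros th _. match goal with |- ?a = ?b => change (@eq C a b) end.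
  unfold ig, F2, Bf, Cdiv. rewrite node_prod_app. change (node_prod (z0 :: nil) (gam rho th)) with (Cmult (Cminus (gam rho th) z0) (RtoC 1)).
  set (g := gam rho th).
  assert (H1 : node_prod XX g <> RtoC 0) by (apply node_prod_gam_nz; apply maxX).
  assert (Hz0 : Cmod (Cminus z0 z0) < 1/2) by (replace (Cminus z0 z0) with (RtoC 0) by ring; rewrite Cmod_0; lra).
  assert (H4 : Cminus g z0 <> RtoC 0) by (apply nz_of_mod; pose proof (gam_far z0 th Hz0); unfold g; lra).
  field. repeat split; auto.
Qed.

Lemma dx_bound : exists K, forall z, Cmod (Cminus z z0) < 1/2 ->
  Cmod (Cminus (Cminus (exp_dd (- tau) (nodes (upd x i z) q)) (exp_dd (- tau) (nodes (upd x i z0) q)))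
               (Cmult (Cminus z z0) (J e0 (XX ++ z0 :: nil) rho))) <= K * (Cmod (Cminus z z0)) ^ 2.
Proof.
  assert (HPI : 0 <= 2 * PI) by (pose proof PI_RGT_0; lra).
  destruct (cont_bound Bf 0 (2 * PI) HPI Cc_Bf) as [M [HM0 HM]].
  exists (Cmod cst * ((2 * PI - 0) * (M * 8))).
  intros z Hz.
  assert (Hz0 : Cmod (Cminus z0 z0) < 1/2) by (replace (Cminus z0 z0) with (RtoC 0) by ring; rewrite Cmod_0; lra).
  rewrite (G_repr z Hz), (G_repr z0 Hz0), D_repr.
  set (Iz := CRInt (Fz z) 0 (2 * PI)). set (I0 := CRInt (Fz z0) 0 (2 * PI)). set (I2 := CRInt F2 0 (2 * PI)).
  assert (HI : CisRInt (fun th => Cminus (Cminus (Fz z th) (Fz z0 th)) (Cmult (Cminus z z0) (F2 th))) 0 (2 * PI)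
                 (Cminus (Cminus Iz I0) (Cmult (Cminus z z0) I2))).
  { apply is_RInt_Cminus. apply is_RInt_Cminus.
    apply CRInt_correct; auto. intros; apply Cc_Fz; auto.
    apply CRInt_correct; auto. intros; apply Cc_Fz; auto.
    apply is_RInt_Cscal. apply CRInt_correct; auto. intros; apply Cc_F2. }
  replace (Cminus (Cminus (Cmult cst Iz) (Cmult cst I0)) (Cmult (Cminus z z0) (Cmult cst I2)))
    with (Cmult cst (Cminus (Cminus Iz I0) (Cmult (Cminus z z0) I2))) by ring.
  rewrite Cmod_mult.
  replace (Cmod cst * ((2 * PI - 0) * (M * 8)) * Cmod (Cminus z z0) ^ 2)
    with (Cmod cst * ((2 * PI - 0) * (M * 8 * Cmod (Cminus z z0) ^ 2))) by ring.
  apply Rmult_le_compat_l. apply Cmod_ge_0.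
  apply (norm_CRInt_le _ 0 (2 * PI) _ _ HPI HI).
  intros th Hth.
  set (g := gam rho th).
  assert (Hf1 := gam_far z th Hz). assert (Hf0 := gam_far z0 th Hz0). fold g in Hf1, Hf0.
  assert (H3 : Cminus g z <> RtoC 0) by (apply nz_of_mod; lra).
  assert (H4 : Cminus g z0 <> RtoC 0) by (apply nz_of_mod; lra).
  assert (E : Cminus (Cminus (Fz z th) (Fz z0 th)) (Cmult (Cminus z z0) (F2 th)) =
     Cmult (Cmult (Bf th) (Cmult (Cminus z z0) (Cminus z z0)))
           (Cinv (Cmult (Cminus g z) (Cmult (Cminus g z0) (Cminus g z0))))).
  { unfold Fz, F2. fold g. field. repeat split; auto. }
  rewrite E, !Cmod_mult.
  assert (HB := HM th Hth).
  assert (Hinv : Cmod (Cinv (Cmult (Cminus g z) (Cmult (Cminus g z0) (Cminus g z0)))) <= 8).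
  { replace 8 with (/ (1/8)) by field. apply Cmod_inv_le. lra. rewrite !Cmod_mult.
    assert (1/2 * 1/2 <= Cmod (Cminus g z0) * Cmod (Cminus g z0)).
    { apply Rmult_le_compat; lra. }
    replace (1/8) with (1/2 * (1/2 * 1/2)) by field.
    apply Rmult_le_compat; try lra. }
  set (m := Cmod (Cminus z z0)) in *.
  assert (0 <= m) by apply Cmod_ge_0.
  pose proof (Cmod_ge_0 (Bf th)).
  pose proof (Cmod_ge_0 (Cinv (Cmult (Cminus g z) (Cmult (Cminus g z0) (Cminus g z0))))).
  simpl. 
  apply Rle_trans with (M * (m * m) * 8).
  - assert (0 <= m * m) by nra.
    apply Rmult_le_compat; auto. apply Rmult_le_pos; auto. apply Rmult_le_compat_r; auto.
  - nra.
Qed.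

Lemma dx_deriv : @is_derive C_AbsRing C_NormedModule
  (fun z => exp_dd (- tau) (nodes (upd x i z) q)) (x i) (J e0 (XX ++ x i :: nil) rho).
Proof.
  destruct dx_bound as [K HK].
  apply (Cderiv_of_bound _ _ _ K (1/2)). lra.
  intros z Hz. apply HK. exact Hz.
Qed.

End DX.
Open Scope R_scope.

Lemma fold_Cplus_acc (l : list C) (a : C) : fold_right Cplus a l = Cplus (fold_right Cplus (RtoC 0) l) a.
Proof. induction l as [|b l IH]; simpl. ring. rewrite IH. ring. Qed.

Lemma Csum_0 f : Csum f 0 = f 0%nat.
Proof. unfold Csum; simpl. match goal with |- ?a = ?b => change (@eq C a b) end. ring. Qed.

Lemma Csum_S f n : Csum f (S n) = Cplus (Csum f n) (f (S n)).
Proof.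
  unfold Csum. rewrite (seq_S (S n) 0). rewrite map_app, fold_right_app. simpl.
  rewrite fold_Cplus_acc. match goal with |- ?a = ?b => change (@eq C a b) end. rewrite fold_Cplus_acc. ring.
Qed.

Lemma Csum_ext_le f g n : (forall k, (k <= n)%nat -> f k = g k) -> Csum f n = Csum g n.
Proof.
  intros H. unfold Csum. f_equal. apply map_ext_in. intros k Hk. apply in_seq in Hk. apply H. lia.
Qed.

Lemma Csum_plus f g n : Csum (fun k => Cplus (f k) (g k)) n = Cplus (Csum f n) (Csum g n).
Proof. induction n. rewrite !Csum_0. ring. rewrite !Csum_S, IHn. ring. Qed.

Lemma Csum_scal c f n : Csum (fun k => Cmult c (f k)) n = Cmult c (Csum f n).
Proof. induction n. rewrite !Csum_0. ring. rewrite !Csum_S, IHn. ring. Qed.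

Lemma Csum_zero n : Csum (fun _ => RtoC 0) n = RtoC 0.
Proof. induction n. rewrite Csum_0. ring. rewrite Csum_S, IHn. ring. Qed.

Lemma RtoC_plus a b : RtoC (a + b) = Cplus (RtoC a) (RtoC b).
Proof. unfold RtoC, Cplus; simpl. f_equal. ring. Qed.
Lemma RtoC_mult a b : RtoC (a * b) = Cmult (RtoC a) (RtoC b).
Proof. unfold RtoC, Cmult; simpl. f_equal; ring. Qed.
Lemma RtoC_opp a : RtoC (- a) = Copp (RtoC a).
Proof. unfold RtoC, Copp; simpl. f_equal. ring. Qed.

Lemma Csum_one n : Csum (fun _ => RtoC 1) n = RtoC (INR (S n)).
Proof.
  induction n. rewrite Csum_0. reflexivity. rewrite Csum_S, IHn.
  rewrite (S_INR (S n)), RtoC_plus. reflexivity.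
Qed.

Lemma dsum_id (xs us : nat -> C) (z : C) n :
  (forall k, (k <= n)%nat -> Cmult (xs k) (us k) = Cminus (Cmult z (us k)) (RtoC 1)) ->
  Cmult (RtoC 2) (Cplus (Csum (fun i => Csum (fun j => if Nat.leb i j then Cmult (Cmult (xs i) (us i)) (us j) else RtoC 0) n) n)
                  (Csum (fun i => Cmult (RtoC (INR i)) (us i)) n))
  = Cminus (Cmult z (Cplus (Cmult (Csum us n) (Csum us n)) (Csum (fun k => Cmult (us k) (us k)) n)))
           (Cmult (RtoC 2) (Csum us n)).
Proof.
  intros Hx.
  assert (Hlin : forall m, (m <= n)%nat -> Csum (fun i => Cmult (xs i) (us i)) m = Cminus (Cmult z (Csum us m)) (RtoC (INR (S m)))).
  { intros m Hm. induction m as [|m IHm].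
    - rewrite !Csum_0, Hx by lia. reflexivity.
    - rewrite !Csum_S, IHm by lia. rewrite Hx by lia. rewrite (S_INR (S m)), RtoC_plus. ring. }
  revert Hx Hlin. induction n as [|n IH]; intros Hx Hlin.
  - rewrite !Csum_0. simpl. rewrite Hx by lia. unfold RtoC, Cminus, Copp, Cplus, Cmult; simpl. f_equal; ring.
  - specialize (IH (fun k Hk => Hx k (le_S _ _ Hk)) (fun m Hm => Hlin m (le_S _ _ Hm))).
    rewrite !Csum_S.
    rewrite (Csum_ext_le (fun i => Csum (fun j => if Nat.leb i j then Cmult (Cmult (xs i) (us i)) (us j) else RtoC 0) (S n))
                         (fun i => Cplus (Csum (fun j => if Nat.leb i j then Cmult (Cmult (xs i) (us i)) (us j) else RtoC 0) n)
                                         (Cmult (Cmult (xs i) (us i)) (us (S n))))).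
    2:{ intros k Hk. rewrite Csum_S. f_equal. assert (Nat.leb k (S n) = true) by (apply Nat.leb_le; lia).
        rewrite H. reflexivity. }
    rewrite Csum_plus.
    rewrite (Csum_ext_le (fun j => if Nat.leb (S n) j then Cmult (Cmult (xs (S n)) (us (S n))) (us j) else RtoC 0)
                         (fun _ => RtoC 0) n).
    2:{ intros k Hk. assert (Nat.leb (S n) k = false) by (apply Nat.leb_gt; lia). rewrite H. reflexivity. }
    rewrite Csum_zero, Nat.leb_refl.
    set (a := us (S n)). set (b := xs (S n)).
    rewrite (Csum_ext_le (fun i => Cmult (Cmult (xs i) (us i)) a) (fun i => Cmult a (Cmult (xs i) (us i))) n)
      by (intros; ring).
    rewrite Csum_scal, Hlin by lia.
    assert (Hb : Cmult b a = Cminus (Cmult z a) (RtoC 1)) by (apply Hx; lia).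
    rewrite (S_INR n), !RtoC_plus.
    replace (Cmult (Cmult b a) a) with (Cmult (Cminus (Cmult z a) (RtoC 1)) a) by (rewrite Hb; reflexivity).
    set (L := Csum (fun i => Csum (fun j => if Nat.leb i j then Cmult (Cmult (xs i) (us i)) (us j) else RtoC 0) n) n) in *.
    set (N := Csum (fun i => Cmult (RtoC (INR i)) (us i)) n) in *.
    set (S1 := Csum us n) in *. set (S2 := Csum (fun k => Cmult (us k) (us k)) n) in *.
    set (nn := RtoC (INR n)).
    transitivity (Cplus (Cmult (RtoC 2) (Cplus L N))
       (Cmult (RtoC 2) (Cplus (Cplus (Cmult a (Cminus (Cmult z S1) (Cplus nn (RtoC 1)))) (Cmult (Cminus (Cmult z a) (RtoC 1)) a))
                                (Cmult (Cplus nn (RtoC 1)) a)))).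
    { ring. }
    rewrite IH. ring.
Qed.
Open Scope R_scope.

Lemma CD_Csum (f f' : nat -> R -> C) n s : (forall k, (k <= n)%nat -> CD (f k) s (f' k s)) ->
  CD (fun t => Csum (fun k => f k t) n) s (Csum (fun k => f' k s) n).
Proof.
  intros H. induction n as [|n IH].
  - apply (CD_ext (f 0%nat)). intros t; rewrite Csum_0; reflexivity.
    rewrite Csum_0. apply H; lia.
  - apply (CD_ext (fun t => Cplus (Csum (fun k => f k t) n) (f (S n) t))).
    intros t; rewrite Csum_S; reflexivity.
    rewrite Csum_S. apply CD_plus. apply IH; intros; apply H; lia. apply H; lia.
Qed.

Lemma Cc_Csum {U : UniformSpace} (f : nat -> U -> C) n x : (forall k, (k <= n)%nat -> continuous (f k) x) ->
  continuous (fun t => Csum (fun k => f k t) n) x.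
Proof.
  intros H. induction n as [|n IH].
  - assert (E : forall t, Csum (fun k => f k t) 0 = f 0%nat t) by (intros; apply Csum_0).
    unfold continuous. rewrite E. apply (filterlim_ext (f 0%nat)). intros; symmetry; apply E. apply H; lia.
  - assert (E : forall t, Csum (fun k => f k t) (S n) = Cplus (Csum (fun k => f k t) n) (f (S n) t)) by (intros; apply Csum_S).
    unfold continuous. rewrite E. apply (filterlim_ext (fun t => Cplus (Csum (fun k => f k t) n) (f (S n) t))).
    intros; symmetry; apply E.
    apply (Cc_plus (fun t => Csum (fun k => f k t) n) (f (S n))).
    apply IH; intros; apply H; lia. apply H; lia.
Qed.

Fixpoint Ssum (ys : list C) (z : C) : C :=
  match ys with nil => RtoC 0 | y :: ys' => Cplus (Cinv (Cminus z y)) (Ssum ys' z) end.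

Lemma dprod_Ssum ys z : (forall y, In y ys -> Cminus z y <> RtoC 0) ->
  node_dprod ys z = Cmult (node_prod ys z) (Ssum ys z).
Proof.
  induction ys as [|y ys IH]; simpl; intros H. ring.
  rewrite IH by auto. field. apply H. auto.
Qed.

Lemma Ssum_nodes x q z : Ssum (nodes x q) z = Csum (fun k => Cinv (Cminus z (x k))) q.
Proof.
  unfold nodes, Csum. generalize (seq 0 (S q)). intros l. induction l; simpl. reflexivity.
  rewrite IHl. reflexivity.
Qed.

Lemma RtoC_tau2 tau : RtoC (- (tau ^ 2) / 2) = Cmult (Copp (Cmult (RtoC tau) (RtoC tau))) (Cinv (RtoC 2)).
Proof. unfold RtoC, Cmult, Cinv, Copp; simpl. f_equal; field. Qed.

Lemma RtoC_2_nz : RtoC 2 <> RtoC 0.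
Proof. intros E. injection E. lra. Qed.

Section W.
Variables (x : nat -> C) (q : nat) (tau : R).

Let X := nodes x q.
Let r := rho x q.
Let c := RtoC (- tau).
Let e := ee c.

Definition us (z : C) (k : nat) : C := Cinv (Cminus z (x k)).
Definition S1 (z : C) : C := Csum (us z) q.
Definition S2 (z : C) : C := Csum (fun k => Cmult (us z k) (us z k)) q.

Definition Wf (z : C) : C :=
  Cmult (Cmult (Cmult (e z) (Cplus (Cminus (RtoC 1) (Cmult z (S1 z))) (Cmult (RtoC tau) z))) (Cinv (node_prod X z))) (Cinv (RtoC 2)).

Definition Tf (z : C) : C :=
  Cmult (Cmult (e z) (Cinv (node_prod X z)))
    (Cminus (Cminus (Cmult (Cmult z (Cplus (Cmult (S1 z) (S1 z)) (S2 z))) (Cinv (RtoC 2))) (S1 z))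
            (Cmult (Cmult (Cmult (RtoC tau) (RtoC tau)) z) (Cinv (RtoC 2)))).

Lemma maxX' : maxmod X < r.
Proof. unfold X, r, rho, XX. pose proof (node_radius_gt (nodes x q)). lra. Qed.

Lemma gam_not_node th k : (k <= q)%nat -> Cminus (gam r th) (x k) <> RtoC 0.
Proof.
  intros Hk. apply nz_of_mod. pose proof (Cmod_rev (gam r th) (x k)).
  pose proof maxX'. pose proof (maxmod_ge X (x k) (in_nodes x q k Hk)).
  rewrite Cmod_gam in H. lra. pose proof (maxmod_nonneg X). lra.
Qed.

Lemma w_deriv th : CD (fun t => Wf (gam r t)) th (Cmult (Cmult Ci (gam r th)) (Tf (gam r th))).
Proof.
  set (g := gam r th).
  assert (HP : node_prod X g <> RtoC 0) by (apply node_prod_gam_nz; apply maxX').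
  assert (HS1 : CD (fun t => S1 (gam r t)) th
     (Csum (fun k => Copp (Cmult (Cminus (Cmult Ci g) (RtoC 0)) (Cinv (Cmult (Cminus g (x k)) (Cminus g (x k)))))) q)).
  { unfold S1, us. apply (CD_Csum (fun k t => Cinv (Cminus (gam r t) (x k)))
        (fun k t => Copp (Cmult (Cminus (Cmult Ci (gam r t)) (RtoC 0)) (Cinv (Cmult (Cminus (gam r t) (x k)) (Cminus (gam r t) (x k))))))).
    intros k Hk. apply CD_inv. apply CD_minus. apply CD_gam_th. apply CD_const. apply gam_not_node; auto. }
  assert (HS2 : Csum (fun k => Copp (Cmult (Cminus (Cmult Ci g) (RtoC 0)) (Cinv (Cmult (Cminus g (x k)) (Cminus g (x k)))))) q
                = Copp (Cmult (Cmult Ci g) (S2 g))).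
  { transitivity (Csum (fun k => Cmult (Copp (Cmult Ci g)) (Cmult (us g k) (us g k))) q).
    - apply Csum_ext_le. intros k Hk. unfold us.
      assert (Hn := gam_not_node th k Hk). fold g in Hn. field. auto.
    - rewrite Csum_scal. unfold S2. ring. }
  assert (HD : node_dprod X g = Cmult (node_prod X g) (S1 g)).
  { unfold X. rewrite dprod_Ssum. rewrite Ssum_nodes. reflexivity.
    intros y Hy. unfold nodes in Hy. apply in_map_iff in Hy. destruct Hy as [k [<- Hk]].
    apply in_seq in Hk. apply gam_not_node. lia. }
  unfold Wf. eapply CD_eq.
  apply CD_mult. apply CD_mult. apply CD_mult.
  apply (proj1 (holo_ee c)). apply CD_gam_th.
  apply CD_plus. apply CD_minus. apply CD_const. apply CD_mult. apply CD_gam_th. exact HS1.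
  apply CD_mult. apply CD_const. apply CD_gam_th.
  apply CD_inv. apply CD_node_prod. apply CD_gam_th. exact HP.
  apply CD_const.
  cbv beta. fold g. rewrite HS2, HD. unfold Tf, e, c. fold g. unfold ee. rewrite RtoC_opp.
  field. exact HP.
Qed.
End W.
Open Scope R_scope.

Section Main.
Variables (x : nat -> C) (q : nat) (tau : R).

Let X := nodes x q.
Let r := rho x q.
Let c := RtoC (- tau).
Let e := ee c.

Lemma maxX2 : maxmod X < r.
Proof. unfold X, r, rho, XX. pose proof (node_radius_gt (nodes x q)). lra. Qed.

Lemma max_app l : (forall y, In y l -> In y X) -> maxmod (X ++ l) < r.
Proof.
  intros Hl. eapply Rle_lt_trans; [|apply maxX2].
  apply maxmod_le. apply maxmod_nonneg.
  intros y Hy. apply in_app_or in Hy. destruct Hy as [Hy|Hy]; apply maxmod_ge; auto.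
Qed.

Lemma max_app1 i : (i <= q)%nat -> maxmod (X ++ x i :: nil) < r.
Proof. intros Hi. apply max_app. intros y [<-|[]]. apply in_nodes; auto. Qed.

Lemma max_app2 i j : (i <= q)%nat -> (j <= q)%nat -> maxmod (X ++ x i :: x j :: nil) < r.
Proof. intros Hi Hj. apply max_app. intros y [<-|[<-|[]]]; apply in_nodes; auto. Qed.

Definition Tot (th : R) : C :=
  Cminus (Csum (fun i => Csum (fun j => if Nat.leb i j then Cmult (x i) (ig e (X ++ x i :: x j :: nil) r th) else RtoC 0) q) q)
   (Cminus (Cmult (RtoC (- (tau ^ 2) / 2)) (ig (f2 c) X r th))
           (Csum (fun i => Cmult (RtoC (INR i)) (ig e (X ++ x i :: nil) r th)) q)).

Lemma Tot_eq th : Tot th = Cmult (Cmult Ci (gam r th)) (Tf x q tau (gam r th)).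
Proof.
  set (g := gam r th).
  assert (HP : node_prod X g <> RtoC 0) by (apply node_prod_gam_nz; apply maxX2).
  assert (Hn : forall k, (k <= q)%nat -> Cminus g (x k) <> RtoC 0) by (intros; apply gam_not_node; auto).
  set (K := Cmult (Cmult (e g) (Cinv (node_prod X g))) (Cmult Ci g)).
  assert (HA : forall i j, (i <= q)%nat -> (j <= q)%nat ->
     ig e (X ++ x i :: x j :: nil) r th = Cmult K (Cmult (us x g i) (us x g j))).
  { intros i j Hi Hj. unfold ig, Cdiv, K, us. fold g. rewrite node_prod_app.
    change (node_prod (x i :: x j :: nil) g) with (Cmult (Cminus g (x i)) (Cmult (Cminus g (x j)) (RtoC 1))).
    field. repeat split; auto. }
  assert (HB : forall i, (i <= q)%nat -> ig e (X ++ x i :: nil) r th = Cmult K (us x g i)).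
  { intros i Hi. unfold ig, Cdiv, K, us. fold g. rewrite node_prod_app.
    change (node_prod (x i :: nil) g) with (Cmult (Cminus g (x i)) (RtoC 1)).
    field. repeat split; auto. }
  assert (HC : ig (f2 c) X r th = Cmult K (Copp g)).
  { unfold ig, Cdiv, K, f2. fold g. fold e. ring. }
  set (L := Csum (fun i => Csum (fun j => if Nat.leb i j then Cmult (Cmult (x i) (us x g i)) (us x g j) else RtoC 0) q) q).
  set (N := Csum (fun i => Cmult (RtoC (INR i)) (us x g i)) q).
  assert (HL : Csum (fun i => Csum (fun j => if Nat.leb i j then Cmult (x i) (ig e (X ++ x i :: x j :: nil) r th) else RtoC 0) q) q
               = Cmult K L).
  { unfold L. rewrite <- Csum_scal. apply Csum_ext_le. intros i Hi.
    rewrite <- Csum_scal. apply Csum_ext_le. intros j Hj.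
    destruct (Nat.leb i j). rewrite HA by auto. ring. ring. }
  assert (HN : Csum (fun i => Cmult (RtoC (INR i)) (ig e (X ++ x i :: nil) r th)) q = Cmult K N).
  { unfold N. rewrite <- Csum_scal. apply Csum_ext_le. intros i Hi. rewrite HB by auto. ring. }
  assert (Hx : forall k, (k <= q)%nat -> Cmult (x k) (us x g k) = Cminus (Cmult g (us x g k)) (RtoC 1)).
  { intros k Hk. unfold us. field. auto. }
  assert (HD := dsum_id x (us x g) g q Hx).
  fold L N in HD.
  assert (HD' : Cplus L N = Cmult (Cminus (Cmult g (Cplus (Cmult (S1 x q g) (S1 x q g)) (S2 x q g))) (Cmult (RtoC 2) (S1 x q g))) (Cinv (RtoC 2))).
  { unfold S1, S2. rewrite <- HD. field. }
  unfold Tot. rewrite HL, HN, HC, RtoC_tau2.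
  transitivity (Cminus (Cmult K (Cplus L N)) (Cmult K (Cmult (Cmult (Cmult (RtoC tau) (RtoC tau)) g) (Cinv (RtoC 2))))).
  { ring. }
  rewrite HD'. unfold Tf, K. fold g. unfold e, X, c. clearbody g. field. auto.
Qed.
End Main.
Open Scope R_scope.

Lemma is_RInt_Csum (f : nat -> R -> C) (I : nat -> C) n a b :
  (forall k, (k <= n)%nat -> CisRInt (f k) a b (I k)) ->
  CisRInt (fun t => Csum (fun k => f k t) n) a b (Csum I n).
Proof.
  intros H. induction n as [|n IH].
  - rewrite Csum_0. apply (is_RInt_ext (V:=C_R_NormedModule) (f 0%nat)).
    intros; rewrite Csum_0; reflexivity. apply H; lia.
  - rewrite Csum_S. apply (is_RInt_ext (V:=C_R_NormedModule) (fun t => Cplus (Csum (fun k => f k t) n) (f (S n) t))).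
    intros; rewrite Csum_S; reflexivity.
    apply is_RInt_Cplus. apply IH; intros; apply H; lia. apply H; lia.
Qed.

Lemma is_RInt_zero a b : CisRInt (fun _ => RtoC 0) a b (RtoC 0).
Proof.
  assert (H := is_RInt_const (V:=C_R_NormedModule) a b (RtoC 0)).
  match type of H with is_RInt _ _ _ ?v => replace v with (RtoC 0) in H end. exact H.
  unfold scal; simpl. unfold prod_scal, RtoC; simpl. unfold scal; simpl. unfold mult; simpl. f_equal; ring.
Qed.

Lemma gam_2PI r : gam r (2 * PI) = gam r 0.
Proof. unfold gam. rewrite cos_2PI, sin_2PI, cos_0, sin_0. reflexivity. Qed.

Section Final.
Variables (x : nat -> C) (q : nat) (tau : R).

Let X := nodes x q.
Let r := rho x q.
Let c := RtoC (- tau).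
Let e := ee c.

Lemma d_cont th : continuous (fun t => Cmult (Cmult Ci (gam r t)) (Tf x q tau (gam r t))) th.
Proof.
  assert (HS1 : continuous (fun t => S1 x q (gam r t)) th).
  { unfold S1, us. apply (Cc_Csum (fun k t => Cinv (Cminus (gam r t) (x k)))).
    intros k Hk. apply Cc_inv. cc. apply gam_not_node; auto. }
  assert (HS2 : continuous (fun t => S2 x q (gam r t)) th).
  { unfold S2, us. apply (Cc_Csum (fun k t => Cmult (Cinv (Cminus (gam r t) (x k))) (Cinv (Cminus (gam r t) (x k))))).
    intros k Hk. apply Cc_mult; apply Cc_inv; try (cc; fail); apply gam_not_node; auto. }
  assert (Hi1 := Cc_Pinv (nodes x q) (fun _ : R => r) (fun t : R => t) th (Rc_const _ _) (Rc_id _) (maxX2 x q)).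
  cbv beta in Hi1.
  unfold Tf, ee. cc.
Qed.

Lemma Tot_int0 : CisRInt (Tot x q tau) 0 (2 * PI) (RtoC 0).
Proof.
  assert (HPI : 0 <= 2 * PI) by (pose proof PI_RGT_0; lra).
  assert (H := RInt_CD (fun t => Wf x q tau (gam r t)) (fun t => Cmult (Cmult Ci (gam r t)) (Tf x q tau (gam r t))) 0 (2 * PI) HPI).
  cbv beta in H. rewrite gam_2PI in H.
  replace (Cminus (Wf x q tau (gam r 0)) (Wf x q tau (gam r 0))) with (RtoC 0) in H by ring.
  apply (is_RInt_ext (V:=C_R_NormedModule) (fun t => Cmult (Cmult Ci (gam r t)) (Tf x q tau (gam r t)))).
  intros t _. symmetry. apply Tot_eq.
  apply H.
  - intros t _. apply w_deriv.
  - intros t _. apply d_cont.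
Qed.

Definition AA i j := CRInt (ig e (X ++ x i :: x j :: nil) r) 0 (2 * PI).
Definition T0 := CRInt (ig (f2 c) X r) 0 (2 * PI).
Definition DD i := CRInt (ig e (X ++ x i :: nil) r) 0 (2 * PI).

Lemma Tot_intV : CisRInt (Tot x q tau) 0 (2 * PI)
  (Cminus (Csum (fun i => Csum (fun j => if Nat.leb i j then Cmult (x i) (AA i j) else RtoC 0) q) q)
          (Cminus (Cmult (RtoC (- (tau ^ 2) / 2)) T0) (Csum (fun i => Cmult (RtoC (INR i)) (DD i)) q))).
Proof.
  assert (HPI : 0 <= 2 * PI) by (pose proof PI_RGT_0; lra).
  unfold Tot. apply is_RInt_Cminus; [|apply is_RInt_Cminus].
  - apply (is_RInt_Csum (fun i t => Csum (fun j => if Nat.leb i j then Cmult (x i) (ig e (X ++ x i :: x j :: nil) r t) else RtoC 0) q)).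
    intros i Hi.
    apply (is_RInt_Csum (fun j t => if Nat.leb i j then Cmult (x i) (ig e (X ++ x i :: x j :: nil) r t) else RtoC 0)).
    intros j Hj. destruct (Nat.leb i j).
    + apply is_RInt_Cscal. apply CRInt_correct; auto. intros t _. apply (ig_cont _ _ (holo_ee _)). apply max_app2; auto.
    + apply is_RInt_zero.
  - apply is_RInt_Cscal. apply CRInt_correct; auto. intros t _. apply (ig_cont _ _ (holo_f2 _)). apply maxX2.
  - apply (is_RInt_Csum (fun i t => Cmult (RtoC (INR i)) (ig e (X ++ x i :: nil) r t))).
    intros i Hi. apply is_RInt_Cscal. apply CRInt_correct; auto. intros t _. apply (ig_cont _ _ (holo_ee _)). apply max_app1; auto.
Qed.

Lemma V_zero : Csum (fun i => Csum (fun j => if Nat.leb i j then Cmult (x i) (AA i j) else RtoC 0) q) q =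
  Cminus (Cmult (RtoC (- (tau ^ 2) / 2)) T0) (Csum (fun i => Cmult (RtoC (INR i)) (DD i)) q).
Proof.
  assert (H1 := is_RInt_unique (V:=C_R_CompleteNormedModule) _ _ _ _ Tot_int0).
  assert (H2 := is_RInt_unique (V:=C_R_CompleteNormedModule) _ _ _ _ Tot_intV).
  rewrite H1 in H2.
  match type of H2 with RtoC 0 = Cminus ?a ?b => 
    transitivity (Cplus (Cminus a b) b); [ring|rewrite <- H2; ring] end.
Qed.

End Final.

Theorem lemma4 (q : nat) (x : nat -> C) (tau : R) :
  exists (dtau : C) (dx : nat -> C),
    @is_derive R_AbsRing C_R_NormedModule
      (fun t : R => exp_dd (- t) (nodes x q)) tau dtau /\
    (forall i : nat, (i <= q)%nat ->
      @is_derive C_AbsRing C_NormedModule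
        (fun z : C => exp_dd (- tau) (nodes (upd x i z) q)) (x i) (dx i)) /\
    Csum (fun i => Csum (fun j =>
        if Nat.leb i j
        then Cmult (x i) (exp_dd (- tau) (nodes x q ++ x i :: x j :: nil))
        else RtoC 0) q) q
    = Cminus (Cmult (RtoC (- (tau ^ 2) / 2)) dtau)
             (Csum (fun i => Cmult (RtoC (INR i)) (dx i)) q).
Proof.
  exists (J (f2 (RtoC (- tau))) (nodes x q) (node_radius (nodes x q))).
  exists (fun i => J (ee (RtoC (- tau))) (nodes x q ++ x i :: nil) (rho x q)).
  split; [|split].
  - apply dtau_deriv.
  - intros i Hi. apply (dx_deriv x q i tau Hi).
  - rewrite (F1 _ _ (holo_f2 _) _ (node_radius (nodes x q)) (rho x q) (node_radius_gt _) (maxX2 x q)).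
    assert (HL : Csum (fun i => Csum (fun j =>
        if Nat.leb i j then Cmult (x i) (exp_dd (- tau) (nodes x q ++ x i :: x j :: nil)) else RtoC 0) q) q
      = Cmult cst (Csum (fun i => Csum (fun j => if Nat.leb i j then Cmult (x i) (AA x q tau i j) else RtoC 0) q) q)).
    { rewrite <- Csum_scal. apply Csum_ext_le. intros i Hi.
      rewrite <- Csum_scal. apply Csum_ext_le. intros j Hj.
      destruct (Nat.leb i j); [|ring].
      rewrite exp_dd_J.
      rewrite (F1 _ _ (holo_ee _) _ _ (rho x q) (node_radius_gt _) (max_app2 x q i j Hi Hj)).
      unfold J, AA. ring. }
    rewrite HL.
    assert (HN : Csum (fun i => Cmult (RtoC (INR i)) (J (ee (RtoC (- tau))) (nodes x q ++ x i :: nil) (rho x q))) q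
                 = Cmult cst (Csum (fun i => Cmult (RtoC (INR i)) (DD x q tau i)) q)).
    { rewrite <- Csum_scal. apply Csum_ext_le. intros i Hi. unfold J, DD. ring. }
    rewrite HN, V_zero. unfold J, T0. ring.
Qed.
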